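(* Let $n\in\mathbb{N}$. For any $m\in\mathbb{N}$ and $0<p\le1$ (and score function $f$ single-peaked at $p$) there exists $\vec t\in\mathbb{R}^m$ (with entries in $[0,1]$) such that $\|\vec t\|_1\le n$ and the ranking game with thresholds $G_{\vec t}=\langle n,m,p,\vec t\rangle$ has a pure equilibrium.
   Context: Setting: $n$ players, queries $q_1,\dots,q_m$, a peak value $p\in(0,1]$ and a score function $f:[0,1]\to[0,1]$ single-peaked at $p$ ($p$ is the unique point such that $f$ is non-decreasing on $[0,p]$ and non-increasing on $[p,1]$). Each player $i$ chooses $d_i\in D=\{d\in[0,1]^m:\sum_j d^j\le1\}$, with score $f(d_i^j)$ for $q_j$. In $G_{\vec t}$, player $i$'s document is eligible for $q_j$ iff $d_i^j\ge\vec t_j$; among eligible documents those of highest score are the winners of $q_j$; if $q_j$ has $h_j$ winners each receives $1/h_j$; a query with no eligible document is won by nobody. Utility is the sum of shares. $\|\vec t\|_1=\sum_j|\vec t_j|$. A pure equilibrium is a pure Nash equilibrium (no player can strictly increase her utility by a unilateral change of document) in which every query has at least one winner. *)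

(* Defs.v *)
From mathcomp Require Import all_boot all_order all_algebra.
From mathcomp Require Import reals.
Set Implicit Arguments. Unset Strict Implicit. Unset Printing Implicit Defensive.
Import Order.TTheory GRing.Theory Num.Theory.
Local Open Scope ring_scope.

Section RankingGame.
Variable R : realType.

Definition peaked_at (f : R -> R) (q : R) : Prop :=
  (forall x y, 0 <= x -> x <= y -> y <= q -> f x <= f y) /\
  (forall x y, q <= x -> x <= y -> y <= 1 -> f y <= f x).

Definition single_peaked (f : R -> R) (p : R) : Prop :=
  (forall x, 0 <= x <= 1 -> 0 <= f x <= 1) /\
  0 <= p <= 1 /\ peaked_at f p /\
  (forall q, 0 <= q <= 1 -> peaked_at f q -> q = p).

Variables (n m : nat).

(* a document: one coordinate per query *)
Definition doc := 'I_m -> R.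
Definition profile := 'I_n -> doc.

Definition in_D (d : doc) : Prop :=
  (forall j, 0 <= d j <= 1) /\ \sum_(j < m) d j <= 1.

Variables (f : R -> R) (t : 'I_m -> R).

Definition eligible (P : profile) (i : 'I_n) (j : 'I_m) : bool := t j <= P i j.

Definition winner (P : profile) (i : 'I_n) (j : 'I_m) : bool :=
  eligible P i j && [forall k, eligible P k j ==> (f (P k j) <= f (P i j))].

Definition nb_winners (P : profile) (j : 'I_m) : nat :=
  #|[set i | winner P i j]|.

Definition utility (P : profile) (i : 'I_n) : R :=
  \sum_(j < m) (if winner P i j then (nb_winners P j)%:R^-1 else 0).

Definition deviate (P : profile) (i : 'I_n) (d : doc) : profile :=
  fun k => if k == i then d else P k.

Definition pure_equilibrium (P : profile) : Prop :=
  (forall i, in_D (P i)) /\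
  (forall i d, in_D d -> utility (deviate P i d) i <= utility P i) /\
  (forall j, (0 < nb_winners P j)%N).

End RankingGame.

(* Main.v *)
Require Import Defs.
From mathcomp Require Import all_boot all_order all_algebra.
From mathcomp Require Import reals.
From mathcomp Require Import zify ring lra.
Set Implicit Arguments. Unset Strict Implicit. Unset Printing Implicit Defensive.
Import Order.TTheory GRing.Theory Num.Theory.
Local Open Scope ring_scope.

Local Open Scope nat_scope.
Lemma card_mod N M a : (0 < M)%N -> (a < M)%N ->
  #|[set x : 'I_N | (x %% M == a)%N]| = (N %/ M + (a < N %% M))%N.
Proof.
move=> M0 aM.
rewrite -sum1_card.
rewrite (eq_bigl (fun x : 'I_N => x %% M == a)); last by move=> x; rewrite inE.
rewrite big_mkcond /= -(big_mkord xpredT (fun i => if i %% M == a then 1 else 0)).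
elim: N => [|N IH]; first by rewrite big_geq // div0n mod0n.
rewrite big_nat_recr //= IH divnS // modnS.
case: (boolP (M %| N.+1)) => Hd /=.
- have HN : N %% M = M.-1.
    have := divn_eq N.+1 M. rewrite (eqP Hd) addn0 => E.
    have : N = (N.+1 %/ M).-1 * M + M.-1.
      case: (N.+1 %/ M) E => [|q] /=; first by [].
      move=> E; lia.
    move=> ->. rewrite modnMDl modn_small //. lia.
  rewrite HN; case: eqP => ?; case: ltnP => ? /=; lia.
- rewrite add0n; case: eqP => ?; case: (ltnP a (N %% M)) => ?; case: (ltnP a (N %% M).+1) => ? /=; lia.
Qed.
Local Open Scope ring_scope.

Section Gen.
Variables (R : realType) (n m : nat) (f : R -> R) (t : 'I_m -> R).

Lemma winner_tie (Q : profile R n m) i k j :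
  winner f t Q i j -> Q k j = Q i j -> winner f t Q k j.
Proof. by rewrite /winner /eligible => + E; rewrite E. Qed.

Lemma winner_elig (Q : profile R n m) i j : winner f t Q i j -> t j <= Q i j.
Proof. by case/andP. Qed.

Lemma share_le (Q : profile R n m) i j (S : {set 'I_n}) :
  winner f t Q i j -> (forall k, k \in S -> winner f t Q k j) -> (0 < #|S|)%N ->
  (nb_winners f t Q j)%:R^-1 <= (#|S|%:R)^-1 :> R.
Proof.
move=> wi HS S0.
have le : (#|S| <= nb_winners f t Q j)%N.
  rewrite /nb_winners; apply: subset_leq_card; apply/subsetP => k kS.
  by rewrite inE HS.
rewrite lef_pV2 ?ler_nat // posrE ltr0n //; exact: leq_trans le.
Qed.

Lemma share_le1 (Q : profile R n m) i j :
  winner f t Q i j -> (nb_winners f t Q j)%:R^-1 <= 1 :> R.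
Proof.
move=> wi; have := @share_le Q i j [set i] wi.
rewrite cards1 invr1; apply => // k; rewrite inE => /eqP -> //.
Qed.

Lemma share_ge0 (Q : profile R n m) j : 0 <= (nb_winners f t Q j)%:R^-1 :> R.
Proof. by rewrite invr_ge0. Qed.

Definition Pown (own : 'I_n -> 'I_m -> bool) : profile R n m :=
  fun i j => if own i j then t j else 0.

Lemma winner_base own (tpos : forall j, 0 < t j) i j :
  winner f t (Pown own) i j = own i j.
Proof.
rewrite /winner /eligible /Pown.
case: (own i j); last by rewrite leNgt tpos.
rewrite lexx /=; apply/forallP => k; apply/implyP.
case: (own k j) => //; by rewrite leNgt tpos.
Qed.

Lemma dev_self (P : profile R n m) i d : deviate P i d i = d.
Proof. by rewrite /deviate eqxx. Qed.

Lemma dev_other (P : profile R n m) i d k : k != i -> deviate P i d k = P k.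
Proof. by rewrite /deviate => /negbTE ->. Qed.

End Gen.

Lemma sum2 (R : realType) (m : nat) (d : 'I_m -> R) j j0 : (forall k, 0 <= d k) -> j != j0 ->
  d j + d j0 <= \sum_k d k.
Proof.
move=> d0 ne; rewrite (bigD1 j) //= (bigD1 j0) /=; last by rewrite eq_sym.
by rewrite lerD2l lerDl sumr_ge0.
Qed.

Lemma caseB (R : realType) n m (f : R -> R) (hm : (0 < m)%N) (hmn : (m <= n)%N) :
  exists t : 'I_m -> R,
    (forall j, 0 <= t j <= 1) /\
    \sum_(j < m) `|t j| <= n%:R /\
    exists P : profile R n m, pure_equilibrium f t P.
Proof.
pose g (i : 'I_n) : 'I_m := Ordinal (ltn_pmod i hm).
pose t := fun _ : 'I_m => 1 : R.
pose own := fun i j => g i == j.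
pose W j := [set k | g k == j].
have cardW j : #|W j| = (n %/ m + (j < n %% m))%N.
  rewrite -(@card_mod n m j hm (ltn_ord j)); apply: eq_card => k.
  by rewrite !inE.
have Wpos j : (0 < #|W j|)%N.
  by rewrite cardW; apply: (@leq_trans (n %/ m)); [rewrite divn_gt0|rewrite leq_addr].
exists t; split; first by move=> j; rewrite /t ler01 lexx.
split.
  rewrite (eq_bigr (fun _ => 1)); last by move=> j _; rewrite normr1.
  by rewrite sumr_const card_ord ler_nat.
exists (Pown t own).
have tpos : forall j, 0 < t j by move=> j; exact: ltr01.
have wb := winner_base f own tpos.
have nbP j : nb_winners f t (Pown t own) j = #|W j|.
  by rewrite /nb_winners; apply: eq_card => k; rewrite !inE wb.
split; [|split].
- move=> i; split.
    by move=> j; rewrite /Pown; case: ifP => _; rewrite /t ?lexx ?ler01.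
  rewrite /Pown -big_mkcond /= (big_pred1 (g i)) ?lexx // => j.
  by rewrite /own /= eq_sym.
- move=> i d [d01 dsum].
  set Q := deviate (Pown t own) i d.
  have UP : utility f t (Pown t own) i = (#|W (g i)|%:R)^-1.
    rewrite /utility.
    under eq_bigr => j _ do rewrite wb nbP.
    rewrite -big_mkcond /= (big_pred1 (g i)) // => j.
    by rewrite /own /= eq_sym.
  rewrite UP.
  case: (boolP [exists j0, 1 <= d j0]).
  + move/existsP => [j0 hj0].
    have d0 : forall k, 0 <= d k by move=> k; case/andP: (d01 k).
    have others j : j != j0 -> ~~ winner f t Q i j.
      move=> ne; apply/negP => /winner_elig; rewrite /Q dev_self /t => hj.
      have := sum2 d0 ne; lra.
    rewrite /utility (bigD1 j0) //= big1 ?addr0; last first.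
      by move=> j /others /negbTE ->.
    case: ifP => wi0; last by rewrite invr_ge0 ler0n.
    have dj0 : d j0 = 1 by case/andP: (d01 j0) => _ h; lra.
    apply: le_trans (share_le (S := i |: W j0) wi0 _ _) _.
    * move=> k; rewrite !inE => /orP [/eqP ->//| gk].
      apply: winner_tie wi0 _.
      case: (eqVneq k i) => [->//|ne].
      by rewrite /Q dev_other // dev_self /Pown /own gk dj0.
    * by apply/card_gt0P; exists i; rewrite !inE eqxx.
    * rewrite lef_pV2 ?posrE ?ltr0n ?Wpos //; last first.
        by apply/card_gt0P; exists i; rewrite !inE eqxx.
      rewrite ler_nat cardsU1.
      case: (eqVneq (g i) j0) => [<-|ne]; first by rewrite leq_addl.
      have -> : i \notin W j0 by rewrite inE.
      rewrite !cardW; case: (_ < _)%N; case: (_ < _)%N; lia.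
  + move/existsPn => H.
    rewrite /utility big1 ?invr_ge0 ?ler0n // => j _.
    case: ifP => // /winner_elig; rewrite /Q dev_self /t => h.
    by move: (H j); rewrite h.
- by move=> j; rewrite nbP Wpos.
Qed.

Lemma sum_ind (R : realType) (I : finType) (A : {set I}) (c : R) :
  \sum_(j : I) (if j \in A then c else 0) = c *+ #|A|.
Proof. by rewrite -big_mkcond sumr_const. Qed.

Lemma sum_lt (R : realType) (I : finType) (F G : I -> R) j0 :
  (forall j, F j <= G j) -> F j0 < G j0 -> \sum_j F j < \sum_j G j.
Proof.
move=> FG s; rewrite (bigD1 j0) //= [X in _ < X](bigD1 j0) //=.
have : \sum_(i | i != j0) F i <= \sum_(i | i != j0) G i by apply: ler_sum.
lra.
Qed.

Lemma caseA (R : realType) n m (f : R -> R) (hn : (0 < n)%N) (hnm : (n <= m)%N) :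
  exists t : 'I_m -> R,
    (forall j, 0 <= t j <= 1) /\
    \sum_(j < m) `|t j| <= n%:R /\
    exists P : profile R n m, pure_equilibrium f t P.
Proof.
pose o (j : 'I_m) : 'I_n := Ordinal (ltn_pmod j hn).
pose q := (m %/ n)%N.
have hq : (0 < q)%N by rewrite divn_gt0.
pose kk (a : nat) := (q + (a < m %% n))%N.
have kkq a : (q <= kk a <= q.+1)%N by rewrite /kk; case: (_ < _)%N; rewrite ?addn0 ?addn1 ?leqnn ?leqnSn.
have kkpos a : (0 < kk a)%N by case/andP: (kkq a) => h _; exact: leq_trans h.
pose t (j : 'I_m) : R := ((kk (o j))%:R)^-1.
pose own := fun i j => o j == i.
have cardO (i : 'I_n) : #|[set j | o j == i]| = kk i.
  rewrite /kk /q -(@card_mod m n i hn (ltn_ord i)); apply: eq_card => k.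
  by rewrite !inE.
have tpos j : 0 < t j by rewrite invr_gt0 ltr0n.
have tlow j : (q.+1%:R)^-1 <= t j.
  rewrite lef_pV2 ?posrE ?ltr0n // ler_nat.
  by case/andP: (kkq (o j)).
have tle1 j : t j <= 1 by rewrite invf_le1 ?ltr0n // ler1n.
exists t; split; first by move=> j; rewrite (ltW (tpos j)) tle1.
set P := Pown t own.
have wb := winner_base f own tpos.
have Psum i : \sum_j P i j = 1.
  rewrite /P /Pown /own.
  rewrite (eq_bigr (fun j => if j \in [set j | o j == i] then (kk i)%:R^-1 else 0)); last first.
    by move=> j _; rewrite inE /t; case: eqP => // ->.
  rewrite sum_ind cardO -[_ *+ kk i]mulr_natr mulVf // pnatr_eq0 -lt0n kkpos //.
have tsum j : t j = \sum_i P i j.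
  rewrite /P /Pown /own -big_mkcond /= (big_pred1 (o j)) //.
split.
  rewrite (eq_bigr t); last by move=> j _; rewrite ger0_norm // ltW.
  rewrite (eq_bigr _ (fun j _ => tsum j)) exchange_big /=.
  rewrite (eq_bigr _ (fun i _ => Psum i)) sumr_const card_ord //.
have nbP j : nb_winners f t P j = 1%N.
  rewrite /nb_winners -(cards1 (o j)); apply: eq_card => k.
  by rewrite !inE wb /own eq_sym.
exists P; split; [|split].
- move=> i; split; last by rewrite Psum.
  by move=> j; rewrite /P /Pown; case: ifP => _; rewrite ?lexx ?ler01 ?tle1 ?(ltW (tpos j)).
- move=> i d [d01 dsum].
  set Q := deviate P i d.
  have d0 : forall k, 0 <= d k by move=> k; case/andP: (d01 k).
  have UP : utility f t P i = (kk i)%:R.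
    rewrite /utility.
    rewrite (eq_bigr (fun j => if j \in [set j | o j == i] then 1 else 0)); last first.
      by move=> j _; rewrite wb nbP inE invr1.
    by rewrite sum_ind cardO.
  rewrite UP.
  set E := [set j | t j <= d j].
  have UE : utility f t Q i <= #|E|%:R.
    rewrite -sum_ind /utility; apply: ler_sum => j _.
    case: ifP => wij.
      have := winner_elig wij; rewrite /Q dev_self => h.
      by rewrite inE h (share_le1 wij).
    by case: ifP.
  have Ed : (q.+1%:R)^-1 *+ #|E| <= \sum_j (if j \in E then d j else 0).
    rewrite -sum_ind; apply: ler_sum => j _; case: ifP => //.
    rewrite inE => h; exact: le_trans (tlow j) h.
  have Ed1 : \sum_j (if j \in E then d j else 0) <= 1.
    apply: le_trans dsum; apply: ler_sum => j _; by case: ifP.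
  have qpos : 0 < q.+1%:R :> R by rewrite ltr0n.
  have Eq : (#|E| <= q.+1)%N.
    rewrite -(ler_nat R).
    have := le_trans Ed Ed1.
    by rewrite -[_ *+ #|E|]mulr_natr mulrC ler_pdivrMr // mul1r.
  case: (boolP (i < m %% n)%N) => hi.
    by apply: le_trans UE _; rewrite ler_nat /kk hi addn1.
  have kki : kk i = q by rewrite /kk (negbTE hi) addn0.
  rewrite kki.
  case: (boolP [exists j, (j \in E) && ((q.+1%:R)^-1 < d j)]).
  + move/existsP => [j0 /andP [j0E j0lt]].
    have Ed' : (q.+1%:R)^-1 *+ #|E| < \sum_j (if j \in E then d j else 0).
      rewrite -sum_ind; apply: (sum_lt (j0 := j0)).
        move=> j; case: ifP => //; rewrite inE => h; exact: le_trans (tlow j) h.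
      by rewrite j0E.
    have : (#|E| < q.+1)%N.
      rewrite -(ltr_nat R).
      have := lt_le_trans Ed' Ed1.
      by rewrite -[_ *+ #|E|]mulr_natr mulrC ltr_pdivrMr // mul1r.
    rewrite ltnS -(ler_nat R) => h; exact: le_trans UE h.
  + move/existsPn => H.
    have UE2 : utility f t Q i <= 2^-1 *+ #|E|.
      rewrite -sum_ind /utility; apply: ler_sum => j _.
      case: ifP => wij; last by case: ifP => // _; rewrite invr_ge0 ler0n.
      have := winner_elig wij; rewrite /Q dev_self => h.
      have jE : j \in E by rewrite inE.
      rewrite jE.
      have dle : d j <= (q.+1%:R)^-1 by move: (H j); rewrite jE /= leNgt.
      have tj : t j = d j by apply: le_anti; rewrite h /=; exact: le_trans dle (tlow j).
      have oji : o j != i.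
        apply/eqP => oj.
        have : t j <= (q.+1%:R)^-1 by rewrite tj.
        rewrite /t oj kki lef_pV2 ?posrE ?ltr0n // ler_nat ltnn //.
      have wo : winner f t Q (o j) j.
        apply: winner_tie wij _.
        by rewrite /Q dev_other // dev_self /P /Pown /own eqxx tj.
      apply: le_trans (share_le (S := [set i; o j]) wij _ _) _.
      * by move=> k; rewrite !inE => /orP [/eqP ->|/eqP ->].
      * by rewrite cards2.
      * by rewrite cards2 eq_sym oji.
    apply: le_trans UE2 _.
    have h1 : (#|E|%:R <= q%:R + 1 :> R) by rewrite natr1 ler_nat.
    have h2 : (1 <= q%:R :> R) by rewrite ler1n.
    rewrite -[_ *+ #|E|]mulr_natr; lra.
- by move=> j; rewrite nbP.
Qed.

Theorem corollary2 (R : realType) (n : nat) (hn : (0 < n)%N) (m : nat)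
  (p : R) (hp : 0 < p <= 1) (f : R -> R) (hf : single_peaked f p) :
  exists t : 'I_m -> R,
    (forall j, 0 <= t j <= 1) /\
    \sum_(j < m) `|t j| <= n%:R /\
    exists P : profile R n m, pure_equilibrium f t P.
Proof.
case: (leqP n m) => h; first exact: caseA.
case: m h => [|m'] h; last by apply: caseB => //; exact: ltnW.
exists (fun _ => 0); split; first by case.
split; first by rewrite big_ord0 ler0n.
exists (fun _ _ => 0); split; [|split].
- by move=> i; split; [case|rewrite big_ord0 ler01].
- by move=> i d _; rewrite /utility !big_ord0.
- by case.
Qed.
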